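(* Let $(X,c)$ be a finite metric space and let $R, M \subseteq X$ be nonempty. Let $Q$ be a minimal subset of $R$ such that $c_{\mu Q} = c_{\mu R}$ for all $\mu \in M$. Then for every $x \in X$, $$c_{xQ} \le 2\,c_{xM} + c_{xR}.$$
   Context: For $x\in X$ and a nonempty $F\subseteq X$, $c_{xF} = \min_{f\in F} c_{xf}$ denotes the distance from $x$ to the nearest point of $F$. *)

(* Defs.v *)
From mathcomp Require Import all_boot all_order all_algebra.
Set Implicit Arguments. Unset Strict Implicit. Unset Printing Implicit Defensive.
Import Order.TTheory GRing.Theory Num.Theory.
Local Open Scope ring_scope.

Definition is_metric (K : realFieldType) (T : finType) (c : T -> T -> K) : Prop :=
  [/\ forall x y, 0 <= c x y,
      forall x y, c x y = 0 <-> x = y,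
      forall x y, c x y = c y x
    & forall x y z, c x z <= c x y + c y z].

(* c_{xF} = min_{f in F} c x f  (meaningful only for nonempty F; 0 otherwise). *)
Definition distS (K : realFieldType) (T : finType) (c : T -> T -> K)
    (x : T) (F : {set T}) : K :=
  match [pick f in F] with
  | Some f0 => \big[Num.min/c x f0]_(f in F) c x f
  | None => 0
  end.

Definition preserves (K : realFieldType) (T : finType) (c : T -> T -> K)
    (R M Q : {set T}) : Prop :=
  [/\ Q \subset R, Q != set0 & forall mu, mu \in M -> distS c mu Q = distS c mu R].

Definition minimal_preserving (K : realFieldType) (T : finType) (c : T -> T -> K)
    (R M Q : {set T}) : Prop :=
  preserves c R M Q /\ forall Q' : {set T}, Q' \proper Q -> ~ preserves c R M Q'.

(* Main.v *)
Require Import Defs.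
From mathcomp Require Import all_boot all_order all_algebra.
Import Order.TTheory GRing.Theory Num.Theory.
Local Open Scope ring_scope.

Lemma distS_le (K : realFieldType) (T : finType) (c : T -> T -> K) x (F : {set T}) f :
  f \in F -> distS c x F <= c x f.
Proof.
move=> fF; rewrite /distS; case: pickP => [f0 _|/(_ f)]; last by rewrite fF.
rewrite (bigD1 f) //=; by rewrite ge_min lexx.
Qed.

Lemma distS_ex (K : realFieldType) (T : finType) (c : T -> T -> K) x (F : {set T}) :
  F != set0 -> exists2 f, f \in F & distS c x F = c x f.
Proof.
move=> /set0Pn [g gF]; rewrite /distS; case: pickP => [f0 f0F|/(_ g)]; last by rewrite gF.
apply: (big_ind (fun v => exists2 f, f \in F & v = c x f)).
- by exists f0.
- move=> a b [fa ? ->] [fb ? ->]; rewrite /Order.min; case: ifP => _.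
    by exists fa. by exists fb.
- by move=> i iF; exists i.
Qed.

Theorem lemma2p1 (K : realFieldType) (T : finType) (c : T -> T -> K)
  (R M Q : {set T}) :
  is_metric c -> R != set0 -> M != set0 ->
  minimal_preserving c R M Q ->
  forall x : T, distS c x Q <= 2 * distS c x M + distS c x R.
Proof.
move=> [c0 _ csym ctri] R0 M0 [[_ Q0 pres] _] x.
have [m mM ->] := @distS_ex _ _ c x _ M0.
have [r rR ->] := @distS_ex _ _ c x _ R0.
have [q qQ Eq] := @distS_ex _ _ c m _ Q0.
have h1 : c m q <= c m x + c x r.
  rewrite -Eq pres //; apply: le_trans (@distS_le _ _ c m _ _ rR) _; exact: ctri.
apply: le_trans (@distS_le _ _ c x _ _ qQ) _.
apply: le_trans (ctri x m q) _.
rewrite mulr2n mulrDl mul1r -addrA lerD2l (csym x m) //.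
Qed.
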